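(* For every $n\ge1$, the set of Tamari interval-posets of size $n$ is a sublattice of the lattice of integer posets on $[n]$ under the weak order on integer relations.
   Context: An integer relation of size $n$ is a reflexive binary relation $R$ on $[n]$, with $\mathrm{Inc}(R)=\{(a,b)\in R:a<b\}$, $\mathrm{Dec}(R)=\{(b,a)\in R:a<b\}$; the weak order on integer relations is $R\le S$ iff $\mathrm{Inc}(S)\subseteq\mathrm{Inc}(R)$ and $\mathrm{Dec}(R)\subseteq\mathrm{Dec}(S)$. An integer poset is an antisymmetric transitive integer relation; the integer posets on $[n]$ form a lattice under this order. A Tamari interval-poset of size $n$ is an integer poset $\triangleleft$ on $[n]$ such that for all $a<b<c$: $a\triangleleft c\Rightarrow b\triangleleft c$ and $c\triangleleft a\Rightarrow b\triangleleft a$. *)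

(* Defs.v *)
(* Elements of [n] are represented by 'I_n (i.e. 0..n-1),
   which is order-isomorphic to {1,..,n}; the order used is the one on nat. *)
From mathcomp Require Import all_boot.
Set Implicit Arguments. Unset Strict Implicit. Unset Printing Implicit Defensive.

Definition int_relation (n : nat) (R : rel 'I_n) : Prop := forall a, R a a.

Definition weak_le (n : nat) (R S : rel 'I_n) : Prop :=
  (forall a b : 'I_n, (a < b)%N -> S a b -> R a b) /\
  (forall a b : 'I_n, (a < b)%N -> R b a -> S b a).

Definition int_poset (n : nat) (R : rel 'I_n) : Prop :=
  int_relation R /\
  (forall a b, R a b -> R b a -> a = b) /\
  (forall a b c, R a b -> R b c -> R a c).

Definition tamari_interval_poset (n : nat) (R : rel 'I_n) : Prop :=
  int_poset R /\
  (forall a b c : 'I_n, (a < b)%N -> (b < c)%N ->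
     (R a c -> R b c) /\ (R c a -> R b a)).

Definition is_poset_meet (n : nat) (R S M : rel 'I_n) : Prop :=
  int_poset M /\ weak_le M R /\ weak_le M S /\
  (forall P, int_poset P -> weak_le P R -> weak_le P S -> weak_le P M).

Definition is_poset_join (n : nat) (R S J : rel 'I_n) : Prop :=
  int_poset J /\ weak_le R J /\ weak_le S J /\
  (forall P, int_poset P -> weak_le R P -> weak_le S P -> weak_le J P).

(* Main.v *)
Require Import Defs.
From mathcomp Require Import all_boot.
From mathcomp Require Import zify.
From Stdlib Require Import FunctionalExtensionality.
Set Implicit Arguments. Unset Strict Implicit. Unset Printing Implicit Defensive.

Lemma connect_ind' (T:finType) (e:rel T) (P : T -> Prop) y :
  P y -> (forall x w, e x w -> connect e w y -> P w -> P x) ->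
  forall x, connect e x y -> P x.
Proof.
move=> Py IH x /connectP [p]; elim: p x => [|w p IHp] x /=.
  by move=> _ <-.
case/andP => exw pw ly; apply: (IH x w exw); last exact: IHp pw ly.
by apply/connectP; exists p.
Qed.

Lemma tip_dec n (T : rel 'I_n) : tamari_interval_poset T -> forall a b w : 'I_n,
  T b a -> (a < w)%N -> (w <= b)%N -> T w a.
Proof.
move=> [_ H] a b w Tba aw wb.
have [wb'|wb'|wb'] := ltngtP w b.
- by have [_ ->] := H a w b aw wb'.
- exfalso; lia.
- by rewrite (ord_inj wb').
Qed.

Lemma tip_inc n (T : rel 'I_n) : tamari_interval_poset T -> forall a b c : 'I_n,
  T a c -> (a <= b)%N -> (b < c)%N -> T b c.
Proof.
move=> [_ H] a b c Tac ab bc.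
have [ab'|ab'|ab'] := ltngtP a b.
- by have [H1 _] := H a b c ab' bc; apply: H1.
- exfalso; lia.
- by rewrite -(ord_inj ab').
Qed.

Lemma step_anti n (T : rel 'I_n) : tamari_interval_poset T -> forall a w b : 'I_n,
  T a w -> (a < w)%N -> T b a -> (w <= b)%N -> False.
Proof.
move=> H a w b Taw aw Tba wb.
have Twa := tip_dec H Tba aw wb.
case: H => [[_ [Han _]] _].
have := Han _ _ Taw Twa => e; rewrite e in aw; lia.
Qed.

Section Meet.
Variable n : nat.
Variables R S : rel 'I_n.
Hypothesis HR : tamari_interval_poset R.
Hypothesis HS : tamari_interval_poset S.

Definition E : rel 'I_n := fun u v => (u < v)%N && (R u v || S u v).
Definition Mt : rel 'I_n := fun a b => if (a <= b)%N then connect E a b else R a b && S a b.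

Lemma connect_le (x y : 'I_n) : connect E x y -> (x <= y)%N.
Proof.
move: x; apply: (connect_ind' (e := E) (P := fun x => (x <= y)%N)) => // x w /andP[xw _] _ wy.
lia.
Qed.

Lemma F1 (a b : 'I_n) : (a < b)%N -> connect E a b -> R b a -> S b a -> False.
Proof.
move=> ab /connectP [[|w p]] /=.
  by move=> _ e; rewrite e in ab; lia.
case/andP => /andP [aw H] pw lw Rba Sba.
have wb : (w <= b)%N by apply: connect_le; apply/connectP; exists p.
case/orP: H => H.
- exact: (step_anti HR H aw Rba wb).
- exact: (step_anti HS H aw Sba wb).
Qed.

Lemma F2 (y z : 'I_n) : (z < y)%N -> R y z -> S y z ->
  forall x, connect E x y -> (x < z)%N -> connect E x z.
Proof.
move=> zy Ryz Syz.
apply: (connect_ind' (e := E) (P := fun x => (x < z)%N -> connect E x z)).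
  by move=> yz; exfalso; lia.
move=> x w Exw cwy IH xz.
have [wz|wz|wz] := ltngtP w z.
- exact: connect_trans (connect1 Exw) (IH wz).
- have wy := connect_le cwy.
  case/andP: (Exw) => xw /orP [H|H]; apply: connect1; rewrite /E xz /=.
  + have Rwz := tip_dec HR Ryz wz wy.
    case: HR => [[_ [_ Rt]] _]; by rewrite (Rt _ _ _ H Rwz).
  + have Swz := tip_dec HS Syz wz wy.
    case: HS => [[_ [_ St]] _]; by rewrite (St _ _ _ H Swz) orbT.
- by rewrite -(ord_inj wz); apply: connect1.
Qed.

Lemma F3 (x y z : 'I_n) : (y < x)%N -> R x y -> S x y -> connect E y z -> (y < z)%N ->
  (x < z)%N /\ connect E x z.
Proof.
move=> yx Rxy Sxy /connectP [[|w p]] /=.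
  by move=> _ e yz; rewrite e in yz; lia.
case/andP => /andP [yw H] pw lw yz.
have cwz : connect E w z by apply/connectP; exists p.
have wz := connect_le cwz.
have xw : (x < w)%N.
  rewrite ltnNge; apply/negP => wx.
  case/orP: H => H; [exact: (step_anti HR H yw Rxy wx) | exact: (step_anti HS H yw Sxy wx)].
split; first lia.
apply: connect_trans cwz; apply: connect1; rewrite /E xw /=.
case/orP: H => H.
- case: HR => [[_ [_ Rt]] _]; by rewrite (Rt _ _ _ Rxy H).
- case: HS => [[_ [_ St]] _]; by rewrite (St _ _ _ Sxy H) orbT.
Qed.

Lemma F4 (b c : 'I_n) : (b < c)%N -> forall x, connect E x c -> (x <= b)%N -> connect E b c.
Proof.
move=> bc.
apply: (connect_ind' (e := E) (P := fun x => (x <= b)%N -> connect E b c)).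
  by move=> cb; exfalso; lia.
move=> x w Exw cwc IH xb.
have [wb|bw] := leqP w b; first exact: IH.
have [xb'|xb'|xb'] := ltngtP x b.
- apply: connect_trans cwc; apply: connect1; rewrite /E bw /=.
  case/andP: Exw => _ /orP [H|H].
  + by rewrite (tip_inc HR H (ltnW xb') bw).
  + by rewrite (tip_inc HS H (ltnW xb') bw) orbT.
- exfalso; lia.
- by rewrite -(ord_inj xb'); apply: connect_trans cwc; apply: connect1.
Qed.

Lemma Mt_poset : int_poset Mt.
Proof.
case: HR => [[Rr [Ra Rt]] _]; case: HS => [[Sr [Sa St]] _].
split; first by move=> a; rewrite /Mt leqnn connect0.
split.
  move=> a b; rewrite /Mt.
  have [ab|ab|ab] := ltngtP a b.
  - move=> /= c /andP [r s]; exfalso; exact: F1 ab c r s.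
  - move=> /= /andP [r s] c; exfalso; exact: F1 ab c r s.
  - by move=> _ _; apply: ord_inj.
move=> a b c; rewrite /Mt.
case: (leqP a b) => ab; case: (leqP b c) => bc.
- rewrite (leq_trans ab bc); exact: connect_trans.
- move=> cab /andP [Rbc Sbc].
  have [ac|ac|ac] := ltngtP a c.
  + by rewrite /=; apply: F2 bc Rbc Sbc a cab ac.
  + rewrite /=; apply/andP; split.
    * exact: (tip_dec HR Rbc ac ab).
    * exact: (tip_dec HS Sbc ac ab).
  + by rewrite (ord_inj ac) ?leqnn /= connect0.
- move=> /andP [Rab Sab] cbc.
  have [bc'|bc'|bc'] := ltngtP b c.
  + by have [ac cac] := F3 ab Rab Sab cbc bc'; rewrite (ltnW ac).
  + exfalso; lia.
  + by rewrite -(ord_inj bc') leqNgt ab /=; apply/andP.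
- move=> /andP [Rab Sab] /andP [Rbc Sbc].
  rewrite leqNgt (ltn_trans bc ab) /=.
  by rewrite (Rt _ _ _ Rab Rbc) (St _ _ _ Sab Sbc).
Qed.

Lemma Mt_meet : is_poset_meet R S Mt.
Proof.
split; first exact: Mt_poset.
split.
  split => a b ab.
  - by move=> H; rewrite /Mt (ltnW ab); apply: connect1; rewrite /E ab H.
  - by rewrite /Mt leqNgt ab /= => /andP [].
split.
  split => a b ab.
  - by move=> H; rewrite /Mt (ltnW ab); apply: connect1; rewrite /E ab H orbT.
  - by rewrite /Mt leqNgt ab /= => /andP [].
move=> P [Pr [_ Pt]] [P1 P2] [Q1 Q2]; split => a b ab.
- rewrite /Mt (ltnW ab); move: a {ab}.
  apply: (connect_ind' (e := E) (P := fun x => P x b)) => // x w /andP [xw /orP [H|H]] _ Pwb.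
  + exact: Pt _ _ _ (P1 _ _ xw H) Pwb.
  + exact: Pt _ _ _ (Q1 _ _ xw H) Pwb.
- by move=> H; rewrite /Mt leqNgt ab /=; rewrite (P2 _ _ ab H) (Q2 _ _ ab H).
Qed.

Lemma Mt_tip : tamari_interval_poset Mt.
Proof.
split; first exact: Mt_poset.
move=> a b c ab bc; split.
- rewrite /Mt (ltnW (ltn_trans ab bc)) (ltnW bc) => H.
  exact: F4 bc a H (ltnW ab).
- rewrite /Mt leqNgt (ltn_trans ab bc) leqNgt ab /= => /andP [Rca Sca].
  by rewrite (tip_dec HR Rca ab (ltnW bc)) (tip_dec HS Sca ab (ltnW bc)).
Qed.

End Meet.

Lemma meet_unique n (R S M1 M2 : rel 'I_n) :
  is_poset_meet R S M1 -> is_poset_meet R S M2 -> M1 = M2.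
Proof.
move=> [P1 [L1 [K1 G1]]] [P2 [L2 [K2 G2]]].
have [A1 A2] := G2 M1 P1 L1 K1.
have [B1 B2] := G1 M2 P2 L2 K2.
case: P1 => r1 _; case: P2 => r2 _.
apply: functional_extensionality => a; apply: functional_extensionality => b.
have [ab|ab|ab] := ltngtP a b.
- by apply/idP/idP => H; [apply: B1 | apply: A1].
- by apply/idP/idP => H; [apply: A2 | apply: B2].
- by rewrite (ord_inj ab) r1 r2.
Qed.

Definition rv n (T : rel 'I_n) : rel 'I_n := fun a b => T (rev_ord a) (rev_ord b).

Lemma rvK n (T : rel 'I_n) : rv (rv T) = T.
Proof.
apply: functional_extensionality => a; apply: functional_extensionality => b.
by rewrite /rv !rev_ordK.
Qed.

Lemma rev_lt n (a b : 'I_n) : (rev_ord a < rev_ord b)%N = (b < a)%N.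
Proof.
have := ltn_ord a; have := ltn_ord b => ha hb /=.
apply/idP/idP => H; lia.
Qed.

Lemma rv_poset n (T : rel 'I_n) : int_poset T -> int_poset (rv T).
Proof.
move=> [r [an t]]; split; first by move=> a; apply: r.
split.
  by move=> a b H1 H2; apply: rev_ord_inj; apply: an.
by move=> a b c; apply: t.
Qed.

Lemma rv_tip n (T : rel 'I_n) : tamari_interval_poset T -> tamari_interval_poset (rv T).
Proof.
move=> [P H]; split; first exact: rv_poset.
move=> a b c ab bc; rewrite /rv.
have ab' : (rev_ord b < rev_ord a)%N by rewrite rev_lt.
have bc' : (rev_ord c < rev_ord b)%N by rewrite rev_lt.
have [H1 H2] := H _ _ _ bc' ab'.
by split.
Qed.

Lemma rv_weak n (T U : rel 'I_n) : weak_le T U -> weak_le (rv U) (rv T).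
Proof.
move=> [W1 W2]; split => a b ab; rewrite /rv.
- by apply: W2; rewrite rev_lt.
- by apply: W1; rewrite rev_lt.
Qed.

Lemma rv_weak' n (T U : rel 'I_n) : weak_le (rv U) (rv T) -> weak_le T U.
Proof. by move=> H; have := rv_weak H; rewrite !rvK. Qed.

Lemma meet_to_join n (R S M : rel 'I_n) :
  is_poset_meet (rv R) (rv S) M -> is_poset_join R S (rv M).
Proof.
move=> [P [L [K G]]]; split; first exact: rv_poset.
split; first by apply: rv_weak'; rewrite rvK.
split; first by apply: rv_weak'; rewrite rvK.
move=> Q PQ RQ SQ; apply: rv_weak'; rewrite rvK.
by apply: G; [exact: rv_poset | exact: rv_weak | exact: rv_weak].
Qed.

Lemma join_to_meet n (R S J : rel 'I_n) :
  is_poset_join R S J -> is_poset_meet (rv R) (rv S) (rv J).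
Proof.
move=> [P [L [K G]]]; split; first exact: rv_poset.
split; first exact: rv_weak.
split; first exact: rv_weak.
move=> Q PQ RQ SQ; apply: rv_weak'; rewrite rvK.
by apply: G; [exact: rv_poset | apply: rv_weak'; rewrite rvK | apply: rv_weak'; rewrite rvK].
Qed.

Theorem mainTheorem8 (n : nat) : (0 < n)%N ->
  forall R S : rel 'I_n,
    tamari_interval_poset R -> tamari_interval_poset S ->
    ((exists M, is_poset_meet R S M) /\
     (forall M, is_poset_meet R S M -> tamari_interval_poset M)) /\
    ((exists J, is_poset_join R S J) /\
     (forall J, is_poset_join R S J -> tamari_interval_poset J)).
Proof.
move=> _ R S HR HS.
have HR' := rv_tip HR; have HS' := rv_tip HS.
split; split.
- by exists (Mt R S); apply: Mt_meet.
- by move=> M HM; rewrite -(meet_unique (Mt_meet HR HS) HM); apply: Mt_tip.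
- exists (rv (Mt (rv R) (rv S))); apply: meet_to_join; exact: Mt_meet.
- move=> J HJ; have HM := join_to_meet HJ.
  rewrite -(rvK J) -(meet_unique (Mt_meet HR' HS') HM).
  by apply: rv_tip; apply: Mt_tip.
Qed.
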